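(* Let $\otimes$ and $\oplus$ be uninorms on $[0,1]$. Then $(\otimes,\oplus)$ satisfies the rearrangement inequality if and only if for all $0\leq x_1\leq x_2\leq 1$ and $0\leq y_1\leq y_2\leq 1$, $$(x_1\otimes y_1)\oplus (x_2\otimes y_2) \geq (x_1\otimes y_2)\oplus (x_2\otimes y_1).$$ Moreover, $(\otimes,\oplus)$ satisfies the dual rearrangement inequality if and only if for all $0\leq x_1\leq x_2\leq 1$ and $0\leq y_1\leq y_2\leq 1$, $$(x_1\oplus y_1)\otimes (x_2\oplus y_2) \leq (x_1\oplus y_2)\otimes (x_2\oplus y_1).$$
   Context: A uninorm is a function $\otimes:[0,1]^2\to[0,1]$ that is commutative, associative, monotonic (for all $x,y,z\in[0,1]$, $x\leq y$ implies $x\otimes z\leq y\otimes z$), and has an identity element $e\in[0,1]$ (i.e. $x\otimes e=x$ for all $x\in[0,1]$). For uninorms $\otimes,\oplus$, the pair $(\otimes,\oplus)$ satisfies the rearrangement inequality if for every $n\geq 1$, all $0\leq x_1\leq\cdots\leq x_n\leq 1$, $0\leq y_1\leq\cdots\leq y_n\leq 1$ and every permutation $\sigma$ of $\{1,\dots,n\}$, $$(x_n\otimes y_1)\oplus\cdots\oplus(x_1\otimes y_n)\leq (x_{\sigma(1)}\otimes y_1)\oplus\cdots\oplus(x_{\sigma(n)}\otimes y_n)\leq (x_1\otimes y_1)\oplus\cdots\oplus(x_n\otimes y_n).$$ It satisfies the dual rearrangement inequality if for all such $n$, $x_i$, $y_i$, $\sigma$, $$(x_n\oplus y_1)\otimes\cdots\otimes(x_1\oplus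 y_n)\geq (x_{\sigma(1)}\oplus y_1)\otimes\cdots\otimes(x_{\sigma(n)}\oplus y_n)\geq (x_1\oplus y_1)\otimes\cdots\otimes(x_n\oplus y_n).$$ (Iterated operations are well defined by associativity; the term $x_n\otimes y_1,\dots,x_1\otimes y_n$ means $x_{n+1-i}\otimes y_i$.) *)

(* Defs.v *)
From Stdlib Require Import Reals.
Open Scope R_scope.

(* A binary operation on [0,1], represented as a total function R -> R -> R
   whose behaviour is only constrained on [0,1]. *)
Definition in01 (x : R) : Prop := 0 <= x <= 1.

Definition is_uninorm (op : R -> R -> R) : Prop :=
  (forall x y, in01 x -> in01 y -> in01 (op x y)) /\
  (forall x y, in01 x -> in01 y -> op x y = op y x) /\
  (forall x y z, in01 x -> in01 y -> in01 z -> op x (op y z) = op (op x y) z) /\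
  (forall x y z, in01 x -> in01 y -> in01 z -> x <= y -> op x z <= op y z) /\
  (exists e, in01 e /\ forall x, in01 x -> op x e = x).

(* Iterated operation over indices 0..n (n+1 terms), left-associated:
   bigop op f n = f 0 op f 1 op ... op f n. *)
Fixpoint bigop (op : R -> R -> R) (f : nat -> R) (n : nat) : R :=
  match n with
  | O => f O
  | S m => op (bigop op f m) (f (S m))
  end.

Definition is_perm (n : nat) (s : nat -> nat) : Prop :=
  (forall i, (i < n)%nat -> (s i < n)%nat) /\
  (forall i j, (i < n)%nat -> (j < n)%nat -> s i = s j -> i = j).

(* Sequences indexed 0..n-1 (0-based version of x_1..x_n). *)
Definition sorted01 (n : nat) (x : nat -> R) : Prop :=
  (forall i, (i < n)%nat -> in01 (x i)) /\
  (forall i j, (i <= j)%nat -> (j < n)%nat -> x i <= x j).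

Definition rearrangement (otimes oplus : R -> R -> R) : Prop :=
  forall (n : nat) (x y : nat -> R) (s : nat -> nat),
    (1 <= n)%nat -> sorted01 n x -> sorted01 n y -> is_perm n s ->
    bigop oplus (fun i => otimes (x (n - 1 - i)%nat) (y i)) (n - 1) <=
    bigop oplus (fun i => otimes (x (s i)) (y i)) (n - 1) /\
    bigop oplus (fun i => otimes (x (s i)) (y i)) (n - 1) <=
    bigop oplus (fun i => otimes (x i) (y i)) (n - 1).

Definition dual_rearrangement (otimes oplus : R -> R -> R) : Prop :=
  forall (n : nat) (x y : nat -> R) (s : nat -> nat),
    (1 <= n)%nat -> sorted01 n x -> sorted01 n y -> is_perm n s ->
    bigop otimes (fun i => oplus (x (n - 1 - i)%nat) (y i)) (n - 1) >=
    bigop otimes (fun i => oplus (x (s i)) (y i)) (n - 1) /\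
    bigop otimes (fun i => oplus (x (s i)) (y i)) (n - 1) >=
    bigop otimes (fun i => oplus (x i) (y i)) (n - 1).

(* Main.v *)
Require Import Defs.
From Stdlib Require Import Reals Lra Lia List Arith.
Open Scope R_scope.

Lemma perm_surj (n : nat) (s : nat -> nat) :
  is_perm n s -> forall v, (v < n)%nat -> exists j, (j < n)%nat /\ s j = v.
Proof.
  intros [Hr Hi] v Hv.
  assert (Hnd : NoDup (map s (seq 0 n))).
  { apply NoDup_map_NoDup_ForallPairs; [|apply seq_NoDup].
    intros a b Ha Hb E. apply in_seq in Ha. apply in_seq in Hb. apply Hi; lia. }
  assert (Hinc : incl (seq 0 n) (map s (seq 0 n))).
  { apply NoDup_length_incl; auto.
    - rewrite length_map; lia.
    - intros a Ha. apply in_map_iff in Ha. destruct Ha as [b [Eb Hb]].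
      apply in_seq in Hb. apply in_seq. subst. specialize (Hr b). lia. }
  assert (In v (seq 0 n)) by (apply in_seq; lia).
  apply Hinc in H. apply in_map_iff in H. destruct H as [j [Ej Hj]].
  apply in_seq in Hj. exists j. split; [lia|auto].
Qed.

Lemma bigop_ext (B : R -> R -> R) (f f' : nat -> R) (k : nat) :
  (forall i, (i <= k)%nat -> f i = f' i) -> bigop B f k = bigop B f' k.
Proof.
  induction k; intros H; simpl.
  - apply H; lia.
  - rewrite IHk by (intros; apply H; lia). rewrite (H (S k)) by lia. reflexivity.
Qed.

Lemma bigop_in01 (B : R -> R -> R) (f : nat -> R) (k : nat) :
  is_uninorm B -> (forall i, (i <= k)%nat -> in01 (f i)) -> in01 (bigop B f k).
Proof.
  intros HB. destruct HB as [Hc _].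
  induction k; intros H; simpl.
  - apply H; lia.
  - apply Hc. apply IHk; intros; apply H; lia. apply H; lia.
Qed.

Definition upd (f : nat -> R) (j : nat) (v : R) : nat -> R :=
  fun i => if Nat.eq_dec i j then v else f i.

Lemma extract (B : R -> R -> R) (e : R) (f : nat -> R) (m j : nat) :
  is_uninorm B -> in01 e -> (forall x, in01 x -> B x e = x) ->
  (forall i, (i <= m)%nat -> in01 (f i)) -> (j <= m)%nat ->
  bigop B f m = B (f j) (bigop B (upd f j e) m).
Proof.
  intros HB He Hid. pose proof HB as HB'.
  destruct HB' as [Hcl [Hcom [Has _]]].
  induction m; intros Hf Hj; simpl.
  - assert (j = 0%nat) by lia. subst. unfold upd; simpl. rewrite Hid; auto.
  - assert (Hin : forall i, (i <= m)%nat -> in01 (upd f j e i)).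
    { intros i Hi. unfold upd. destruct (Nat.eq_dec i j); auto. }
    destruct (Nat.eq_dec j (S m)) as [E|E].
    + subst. unfold upd at 2. destruct (Nat.eq_dec (S m) (S m)); [|congruence].
      rewrite Hid by (apply bigop_in01; auto).
      rewrite (bigop_ext B (upd f (S m) e) f) by (intros i Hi; unfold upd; destruct (Nat.eq_dec i (S m)); [lia|auto]).
      apply Hcom. apply bigop_in01; auto; intros; apply Hf; lia. apply Hf; lia.
    + rewrite IHm by (try lia; intros; apply Hf; lia).
      replace (upd f j e (S m)) with (f (S m))
        by (unfold upd; destruct (Nat.eq_dec (S m) j); [lia|reflexivity]).
      rewrite Has; auto; try (apply Hf; lia). apply bigop_in01; auto.
Qed.

Lemma swap_le (B : R -> R -> R) (le : R -> R -> Prop) (f f' : nat -> R) (j k : nat) :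
  is_uninorm B ->
  (forall a b c, in01 a -> in01 b -> in01 c -> le a b -> le (B a c) (B b c)) ->
  (j < k)%nat ->
  (forall i, (i <= k)%nat -> in01 (f i)) ->
  (forall i, (i <= k)%nat -> in01 (f' i)) ->
  (forall i, (i <= k)%nat -> i <> j -> i <> k -> f i = f' i) ->
  le (B (f j) (f k)) (B (f' j) (f' k)) ->
  le (bigop B f k) (bigop B f' k).
Proof.
  intros HB Hmono Hjk Hf Hf' Hag Hle.
  pose proof HB as HB'. destruct HB' as [Hcl [Hcom [Has [_ [e [He Hid]]]]]].
  assert (D : forall g, (forall i, (i <= k)%nat -> in01 (g i)) ->
     bigop B g k = B (B (g j) (g k)) (bigop B (upd (upd g j e) k e) k)).
  { intros g Hg.
    rewrite (extract B e g k j) by (auto; lia).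
    assert (Hh : forall i, (i <= k)%nat -> in01 (upd g j e i)).
    { intros i Hi; unfold upd; destruct (Nat.eq_dec i j); auto. }
    rewrite (extract B e (upd g j e) k k) by (auto; lia).
    replace (upd g j e k) with (g k)
      by (unfold upd; destruct (Nat.eq_dec k j); [lia|reflexivity]).
    rewrite Has; auto; try (apply Hg; lia).
    apply bigop_in01; auto. intros i Hi; unfold upd; destruct (Nat.eq_dec i k); auto.
    apply Hh; auto. }
  rewrite (D f Hf), (D f' Hf').
  rewrite (bigop_ext B (upd (upd f' j e) k e) (upd (upd f j e) k e)).
  2:{ intros i Hi. unfold upd. destruct (Nat.eq_dec i k); auto.
      destruct (Nat.eq_dec i j); auto. symmetry; apply Hag; auto. }
  apply Hmono; auto; try (apply Hcl; apply Hf || apply Hf'; lia).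
  apply bigop_in01; auto. intros i Hi; unfold upd.
  destruct (Nat.eq_dec i k); auto. destruct (Nat.eq_dec i j); auto.
Qed.

Lemma core (B : R -> R -> R) (le : R -> R -> Prop) (G : nat -> nat -> R) (K : nat) :
  is_uninorm B ->
  (forall a, le a a) ->
  (forall a b c, le a b -> le b c -> le a c) ->
  (forall a b c, in01 a -> in01 b -> in01 c -> le a b -> le (B a c) (B b c)) ->
  (forall a i, (a <= K)%nat -> (i <= K)%nat -> in01 (G a i)) ->
  (forall a b i i', (a <= b)%nat -> (b <= K)%nat -> (i <= i')%nat -> (i' <= K)%nat ->
      le (B (G a i') (G b i)) (B (G a i) (G b i'))) ->
  forall k, (k <= K)%nat -> forall s, is_perm (S k) s ->
  le (bigop B (fun i => G (s i) i) k) (bigop B (fun i => G i i) k).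
Proof.
  intros HB Hrefl Htr Hmono Hin Hc.
  pose proof HB as HB'. destruct HB' as [Hcl [Hcom _]].
  induction k; intros HkK s Hs.
  - simpl. destruct Hs as [Hr _]. specialize (Hr 0%nat). assert (s 0%nat = 0%nat) by lia.
    rewrite H. apply Hrefl.
  - destruct (perm_surj _ _ Hs (S k)) as [j [Hj Hsj]]; [lia|].
    destruct Hs as [Hr Hi].
    set (m := s (S k)).
    set (s' := fun i => if Nat.eq_dec i j then m else s i).
    set (t := fun i => if Nat.eq_dec i (S k) then S k else s' i).
    assert (Hs' : is_perm (S k) s').
    { split.
      - intros i Hi'. unfold s'. destruct (Nat.eq_dec i j).
        + subst i. unfold m. assert (s (S k) < S (S k))%nat by (apply Hr; lia).
          assert (s (S k) <> S k) by (intro E; assert (j = S k) by (apply Hi; lia); lia). lia.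
        + assert (s i < S (S k))%nat by (apply Hr; lia).
          assert (s i <> S k) by (intro E; apply n; apply Hi; lia). lia.
      - intros i1 i2 H1 H2 E. unfold s' in E.
        destruct (Nat.eq_dec i1 j), (Nat.eq_dec i2 j); unfold m in E;
        first [lia | (assert (S k = i2) by (apply Hi; lia); lia)
                   | (assert (i1 = S k) by (apply Hi; lia); lia) | (apply Hi; lia)]. }
    assert (Hsin : forall i, (i <= S k)%nat -> (s i <= K)%nat).
    { intros i Hi'. specialize (Hr i). lia. }
    assert (Hmk : (m <= S k)%nat) by (unfold m; specialize (Hr (S k)); lia).
    assert (Htin : forall i, (i <= S k)%nat -> (t i <= K)%nat).
    { intros i Hi'. unfold t, s'. destruct (Nat.eq_dec i (S k)); [lia|].
      destruct (Nat.eq_dec i j); [lia|]. apply Hsin; lia. }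
    assert (step1 : le (bigop B (fun i => G (s i) i) (S k)) (bigop B (fun i => G (t i) i) (S k))).
    { destruct (Nat.eq_dec j (S k)) as [E|E].
      - rewrite (bigop_ext B (fun i => G (s i) i) (fun i => G (t i) i)). apply Hrefl.
        intros i Hi'. unfold t, s'. destruct (Nat.eq_dec i (S k)).
        + subst i. rewrite <- E at 1. rewrite Hsj. reflexivity.
        + destruct (Nat.eq_dec i j); [lia|reflexivity].
      - apply swap_le with (j := j); auto; try lia.
        + intros i Hi'. apply Hin; auto; lia.
        + intros i Hi'. apply Hin; auto; lia.
        + intros i Hi' H1 H2. unfold t, s'.
          destruct (Nat.eq_dec i (S k)); [lia|]. destruct (Nat.eq_dec i j); [lia|reflexivity].
        + unfold t, s'. destruct (Nat.eq_dec j (S k)); [lia|].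
          destruct (Nat.eq_dec j j); [|lia]. destruct (Nat.eq_dec (S k) (S k)); [|lia].
          rewrite Hsj. fold m.
          rewrite Hcom by (apply Hin; lia).
          apply Hc; lia. }
    eapply Htr; [exact step1|]. simpl.
    assert (Et : t (S k) = S k) by (unfold t; destruct (Nat.eq_dec (S k) (S k)); lia).
    rewrite Et.
    rewrite (bigop_ext B (fun i => G (t i) i) (fun i => G (s' i) i)).
    2:{ intros i Hi'. unfold t. destruct (Nat.eq_dec i (S k)); [lia|reflexivity]. }
    apply Hmono.
    + apply bigop_in01; auto. intros i Hi'. destruct Hs' as [Hr' _].
      specialize (Hr' i). apply Hin; lia.
    + apply bigop_in01; auto. intros i Hi'. apply Hin; lia.
    + apply Hin; lia.
    + apply IHk; auto; lia.
Qed.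

Lemma both (B : R -> R -> R) (le : R -> R -> Prop) (G : nat -> nat -> R) (K : nat) (s : nat -> nat) :
  is_uninorm B ->
  (forall a, le a a) ->
  (forall a b c, le a b -> le b c -> le a c) ->
  (forall a b c, in01 a -> in01 b -> in01 c -> le a b -> le (B a c) (B b c)) ->
  (forall a i, (a <= K)%nat -> (i <= K)%nat -> in01 (G a i)) ->
  (forall a b i i', (a <= b)%nat -> (b <= K)%nat -> (i <= i')%nat -> (i' <= K)%nat ->
      le (B (G a i') (G b i)) (B (G a i) (G b i'))) ->
  is_perm (S K) s ->
  le (bigop B (fun i => G (K - i)%nat i) K) (bigop B (fun i => G (s i) i) K) /\
  le (bigop B (fun i => G (s i) i) K) (bigop B (fun i => G i i) K).
Proof.
  intros HB Hrefl Htr Hmono Hin Hc Hs.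
  pose proof HB as HB'. destruct HB' as [Hcl [Hcom _]].
  split; [|apply (core B le G K); auto].
  pose proof (core B (fun a b => le b a) (fun a i => G (K - a)%nat i) K HB) as C.
  assert (Hs2 : is_perm (S K) (fun i => K - s i)%nat).
  { destruct Hs as [Hr Hi]. split.
    - intros; lia.
    - intros i1 i2 H1 H2 E. apply Hi; auto. pose proof (Hr i1 H1). pose proof (Hr i2 H2). lia. }
  specialize (C Hrefl ltac:(intros a b c H1 H2; exact (Htr c b a H2 H1))
     ltac:(intros a b c Ha Hb Hc' Hab; apply Hmono; auto)
     ltac:(intros a i Ha Hi; apply Hin; lia)).
  refine (_ (C _ K (le_n K) _ Hs2)).
  - intros H. rewrite (bigop_ext B (fun i => G (s i) i) (fun i => G (K - (K - s i))%nat i)); auto.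
    intros i Hi. destruct Hs as [Hr _]. specialize (Hr i). f_equal. lia.
  - intros a b i i' Hab HbK Hii HiK. simpl.
    rewrite (Hcom (G (K - a)%nat i')), (Hcom (G (K - a)%nat i)) by (apply Hin; lia).
    apply Hc; lia.
Qed.

Theorem theorem2 (otimes oplus : R -> R -> R) :
  is_uninorm otimes -> is_uninorm oplus ->
  (rearrangement otimes oplus <->
     (forall x1 x2 y1 y2, 0 <= x1 -> x1 <= x2 -> x2 <= 1 ->
        0 <= y1 -> y1 <= y2 -> y2 <= 1 ->
        oplus (otimes x1 y1) (otimes x2 y2) >= oplus (otimes x1 y2) (otimes x2 y1)))
  /\
  (dual_rearrangement otimes oplus <->
     (forall x1 x2 y1 y2, 0 <= x1 -> x1 <= x2 -> x2 <= 1 ->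
        0 <= y1 -> y1 <= y2 -> y2 <= 1 ->
        otimes (oplus x1 y1) (oplus x2 y2) <= otimes (oplus x1 y2) (oplus x2 y1))).
Proof.
  intros HT HS.
  pose proof HT as HT'. destruct HT' as [Tcl [Tcom [Tas [Tmono _]]]].
  pose proof HS as HS'. destruct HS' as [Scl [Scom [Sas [Smono _]]]].
  assert (Hperm2 : is_perm 2 (fun i => 1 - i)%nat).
  { split; intros; lia. }
  assert (Hsort : forall a b, 0 <= a -> a <= b -> b <= 1 ->
            sorted01 2 (fun i => match i with O => a | _ => b end)).
  { intros a b H1 H2 H3. split.
    - intros i Hi. destruct i; unfold in01; lra.
    - intros i j Hij Hj. destruct i, j; try lra; lia. }
  split; split.
  - intros HR x1 x2 y1 y2 H1 H2 H3 H4 H5 H6.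
    destruct (HR 2%nat _ _ _ (le_S _ _ (le_n 1)) (Hsort x1 x2 H1 H2 H3) (Hsort y1 y2 H4 H5 H6) Hperm2)
      as [_ HH].
    simpl in HH. apply Rle_ge. rewrite Scom; auto; apply Tcl; unfold in01; lra.
  - intros H n x y s Hn [Hx1 Hx2] [Hy1 Hy2] Hs.
    destruct n as [|K]; [lia|].
    replace (S K - 1)%nat with K by lia.
    apply (both oplus Rle (fun a i => otimes (x a) (y i)) K s HS); auto.
    + intros; lra.
    + intros; lra.
    + intros a i Ha Hi. apply Tcl; [apply Hx1|apply Hy1]; lia.
    + intros a b i i' Hab HbK Hii HiK. apply Rge_le.
      pose proof (Hx1 a ltac:(lia)). pose proof (Hx1 b ltac:(lia)).
      pose proof (Hy1 i ltac:(lia)). pose proof (Hy1 i' ltac:(lia)).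
      pose proof (Hx2 a b Hab ltac:(lia)). pose proof (Hy2 i i' Hii ltac:(lia)).
      unfold in01 in *. apply H; lra.
  - intros HR x1 x2 y1 y2 H1 H2 H3 H4 H5 H6.
    destruct (HR 2%nat _ _ _ (le_S _ _ (le_n 1)) (Hsort x1 x2 H1 H2 H3) (Hsort y1 y2 H4 H5 H6) Hperm2)
      as [_ HH].
    simpl in HH. apply Rge_le. rewrite Tcom; auto; apply Scl; unfold in01; lra.
  - intros H n x y s Hn [Hx1 Hx2] [Hy1 Hy2] Hs.
    destruct n as [|K]; [lia|].
    replace (S K - 1)%nat with K by lia.
    apply (both otimes Rge (fun a i => oplus (x a) (y i)) K s HT); auto.
    + intros; lra.
    + intros; lra.
    + intros a b c Ha Hb Hc Hab. apply Rle_ge. apply Tmono; auto. lra.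
    + intros a i Ha Hi. apply Scl; [apply Hx1|apply Hy1]; lia.
    + intros a b i i' Hab HbK Hii HiK. apply Rle_ge.
      pose proof (Hx1 a ltac:(lia)). pose proof (Hx1 b ltac:(lia)).
      pose proof (Hy1 i ltac:(lia)). pose proof (Hy1 i' ltac:(lia)).
      pose proof (Hx2 a b Hab ltac:(lia)). pose proof (Hy2 i i' Hii ltac:(lia)).
      unfold in01 in *. apply H; lra.
Qed.
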